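(* Let $K$ be a field of characteristic $\neq 2$ and let $\mathcal C$ be a 2-dimensional EACP over $K$ (natural basis $\{h,r\}$) with $\mathcal C^2\neq0$. Then $\mathcal C$ is isomorphic to exactly one of the following algebras with basis $\{h,r\}$: $\mathcal C_1$: $rh=hr=h$, $h^2=r^2=0$; $\mathcal C_2$: $rh=hr=\frac12(h+r)$, $h^2=r^2=0$; and $\mathcal C_1$, $\mathcal C_2$ are not isomorphic.
   Context: An EACP over a field $K$ (characteristic $\neq 2$) is a $K$-algebra $\mathcal C$ with a basis $\{h_1,\dots,h_n,r\}$ (called a natural basis) whose multiplication is determined by bilinearity from $$h_ir=rh_i=\tfrac12\Big(\sum_{j=1}^n a_{ij}h_j+b_ir\Big),\qquad h_ih_j=0\ (i,j=1,\dots,n),\qquad rr=0,$$ for some constants $a_{ij},b_i\in K$. For $n=1$ this reads $hr=rh=\frac12(ah+br)$, $h^2=r^2=0$. $\mathcal C^2$ denotes the span of all products $xy$, $x,y\in\mathcal C$. Isomorphism means algebra isomorphism. *)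

(* Defs.v *)
(* A 2-dimensional algebra over K is modelled on the
   coordinate space 'rV[K]_2, the natural basis being h = e_0, r = e_1;
   its multiplication is the bilinear extension of a multiplication table
   on basis vectors. *)
From HB Require Import structures.
From mathcomp Require Import all_boot all_order all_algebra.
Set Implicit Arguments. Unset Strict Implicit. Unset Printing Implicit Defensive.
Import GRing.Theory.
Local Open Scope ring_scope.

Section TwoDim.
Variable K : fieldType.

Definition bh : 'rV[K]_2 := delta_mx 0 0.
Definition br : 'rV[K]_2 := delta_mx 0 1.

Definition mul_of_table (t : 'I_2 -> 'I_2 -> 'rV[K]_2) (x y : 'rV[K]_2) : 'rV[K]_2 :=
  \sum_(i < 2) \sum_(j < 2) (x 0 i * y 0 j) *: t i j.

Definition sym_table (v : 'rV[K]_2) (i j : 'I_2) : 'rV[K]_2 :=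
  if i != j then v else 0.

(* The 2-dimensional EACP (n = 1): hr = rh = 1/2 (a h + b r), h^2 = r^2 = 0 *)
Definition eacp2_mul (a b : K) : 'rV[K]_2 -> 'rV[K]_2 -> 'rV[K]_2 :=
  mul_of_table (sym_table (2%:R^-1 *: (a *: bh + b *: br))).

Definition C1_mul : 'rV[K]_2 -> 'rV[K]_2 -> 'rV[K]_2 :=
  mul_of_table (sym_table bh).

Definition C2_mul : 'rV[K]_2 -> 'rV[K]_2 -> 'rV[K]_2 :=
  mul_of_table (sym_table (2%:R^-1 *: (bh + br))).

(* C^2 <> 0 : the span of all products is nonzero, i.e. some product is nonzero *)
Definition square_nonzero (m : 'rV[K]_2 -> 'rV[K]_2 -> 'rV[K]_2) : Prop :=
  exists x y, m x y != 0.

Definition alg_iso (m1 m2 : 'rV[K]_2 -> 'rV[K]_2 -> 'rV[K]_2)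
    (f : 'rV[K]_2 -> 'rV[K]_2) : Prop :=
  [/\ (forall (c : K) x y, f (c *: x + y) = c *: f x + f y),
      bijective f &
      (forall x y, f (m1 x y) = m2 (f x) (f y))].

Definition alg_isomorphic (m1 m2 : 'rV[K]_2 -> 'rV[K]_2 -> 'rV[K]_2) : Prop :=
  exists f, alg_iso m1 m2 f.

End TwoDim.

(* Main.v *)
Require Import Defs.
From HB Require Import structures.
From mathcomp Require Import all_boot all_order all_algebra.
From mathcomp Require Import ring.
Import GRing.Theory.
Local Open Scope ring_scope.

Section Aux.
Variable K : fieldType.

Lemma mulE (v x y : 'rV[K]_2) :
  mul_of_table (sym_table v) x y = (x 0 0 * y 0 1 + x 0 1 * y 0 0) *: v.
Proof.
rewrite /mul_of_table !big_ord_recl !big_ord0 /sym_table /=.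
rewrite !scaler0 !add0r !addr0 scalerDl.
have -> : lift ord0 ord0 = 1 :> 'I_2 by exact: val_inj.
by [].
Qed.

Lemma bhE i : bh K 0 i = (i == 0)%:R.
Proof. by rewrite /bh mxE. Qed.
Lemma brE i : br K 0 i = (i == 1)%:R.
Proof. by rewrite /br mxE. Qed.

Definition PP (m : 'rV[K]_2 -> 'rV[K]_2 -> 'rV[K]_2) :=
  forall x y z w, m (m x y) (m z w) = 0.

Lemma lin0 (f : 'rV[K]_2 -> 'rV[K]_2) :
  (forall (c : K) x y, f (c *: x + y) = c *: f x + f y) -> f 0 = 0.
Proof.
move=> hf; have := hf 1 0 0; rewrite addr0 !scale1r.
by move=> /(congr1 (fun t => t - f 0)); rewrite subrr addrK.
Qed.

Lemma PP_fwd m1 m2 f : alg_iso m1 m2 f -> PP m1 -> PP m2.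
Proof.
case=> hl [g fg gf] hm P x y z w.
by rewrite -(gf x) -(gf y) -(gf z) -(gf w) -!hm P (lin0 _ hl).
Qed.

Lemma PP_bwd m1 m2 f : alg_iso m1 m2 f -> PP m2 -> PP m1.
Proof.
case=> hl [g fg gf] hm P x y z w.
apply: (can_inj fg); by rewrite !hm P (lin0 _ hl).
Qed.

Lemma PP_C1 : PP (@C1_mul K).
Proof.
move=> x y z w; rewrite /C1_mul !mulE; apply/rowP => j.
by rewrite !mxE /= !(mulr1, mulr0, mul0r, addr0).
Qed.

Lemma notPP_C2 : (2%:R : K) != 0 -> ~ PP (@C2_mul K).
Proof.
move=> h2 P; have := P (bh K) (br K) (bh K) (br K).
rewrite /C2_mul !mulE => /rowP /(_ 0).
rewrite !mxE /= !(mulr1, mulr0, mul0r, addr0, add0r).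
move/eqP; apply/negP.
rewrite !mul1r -mulr_natr.
rewrite !mulf_neq0 ?invr_eq0 ?mul1r //.
have -> : forall t : K, t + t = t * 2%:R by move=> t; rewrite mulr_natr mulr2n.
apply: mulf_neq0 => //.
by apply: mulf_neq0; rewrite ?invr_eq0.
Qed.

Lemma I2P (j : 'I_2) : j = 0 \/ j = 1.
Proof. case: j => [[|[|//]]] H; [left|right]; exact: val_inj. Qed.

Definition diagf (c d : K) (x : 'rV[K]_2) : 'rV[K]_2 :=
  \row_(j < 2) (if j == 0 then c * x 0 0 else d * x 0 1).
Definition swapf (c d : K) (x : 'rV[K]_2) : 'rV[K]_2 :=
  \row_(j < 2) (if j == 0 then c * x 0 1 else d * x 0 0).

Lemma diag_lin c d (k : K) x y : diagf c d (k *: x + y) = k *: diagf c d x + diagf c d y.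
Proof.
apply/rowP => j; rewrite !mxE; case: ifP => _; rewrite ?mxE; ring.
Qed.
Lemma swap_lin c d (k : K) x y : swapf c d (k *: x + y) = k *: swapf c d x + swapf c d y.
Proof.
apply/rowP => j; rewrite !mxE; case: ifP => _; rewrite ?mxE; ring.
Qed.

Lemma diag_bij c d : c != 0 -> d != 0 -> bijective (diagf c d).
Proof.
move=> hc hd; exists (diagf c^-1 d^-1) => x; apply/rowP => j;
rewrite /diagf; case: (I2P j) => ->; rewrite !mxE /= mulrA ?mulVf ?divff ?mul1r //.
Qed.

Lemma swap_bij c d : c != 0 -> d != 0 -> bijective (swapf c d).
Proof.
move=> hc hd; exists (swapf d^-1 c^-1) => x; apply/rowP => j;
rewrite /swapf; case: (I2P j) => ->; rewrite !mxE /= mulrA ?mulVf ?divff ?mul1r //.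
Qed.

Lemma iso_a (a : K) : (2%:R : K) != 0 -> a != 0 ->
  alg_iso (eacp2_mul a 0) (@C1_mul K) (diagf 1 (a / 2%:R)).
Proof.
move=> h2 ha; split; first exact: diag_lin.
  by apply: diag_bij; rewrite ?oner_eq0 // mulf_neq0 ?invr_eq0.
move=> x y; rewrite /eacp2_mul /C1_mul !mulE; apply/rowP => j; rewrite /diagf.
by case: (I2P j) => ->; rewrite !mxE /=; ring.
Qed.

Lemma iso_b (b : K) : (2%:R : K) != 0 -> b != 0 ->
  alg_iso (eacp2_mul 0 b) (@C1_mul K) (swapf 1 (b / 2%:R)).
Proof.
move=> h2 hb; split; first exact: swap_lin.
  by apply: swap_bij; rewrite ?oner_eq0 // mulf_neq0 ?invr_eq0.
move=> x y; rewrite /eacp2_mul /C1_mul !mulE; apply/rowP => j; rewrite /swapf.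
by case: (I2P j) => ->; rewrite !mxE /=; ring.
Qed.

Lemma iso_ab (a b : K) : a != 0 -> b != 0 ->
  alg_iso (eacp2_mul a b) (@C2_mul K) (diagf b a).
Proof.
move=> ha hb; split; first exact: diag_lin.
  exact: diag_bij.
move=> x y; rewrite /eacp2_mul /C2_mul !mulE; apply/rowP => j; rewrite /diagf.
by case: (I2P j) => ->; rewrite !mxE /=; ring.
Qed.

End Aux.

Theorem mainTheorem13 (K : fieldType) (hK : 2%N \notin [pchar K]) (a b : K) :
  square_nonzero (eacp2_mul a b) ->
  ((alg_isomorphic (eacp2_mul a b) (@C1_mul K) /\
      ~ alg_isomorphic (eacp2_mul a b) (@C2_mul K)) \/
   (~ alg_isomorphic (eacp2_mul a b) (@C1_mul K) /\
      alg_isomorphic (eacp2_mul a b) (@C2_mul K))) /\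
  ~ alg_isomorphic (@C1_mul K) (@C2_mul K).
Proof.
move=> hsq.
have h2 : (2%:R : K) != 0.
  apply/negP => h; move/negP: hK; apply; by rewrite inE /= h.
have nC12 : ~ alg_isomorphic (@C1_mul K) (@C2_mul K).
  by case=> f Hf; apply: (@notPP_C2 K h2); apply: PP_fwd Hf (@PP_C1 K).
split=> //.
have [a0|a0] := eqVneq a 0; have [b0|b0] := eqVneq b 0.
- exfalso; case: hsq => x [y]; subst a b.
  by rewrite /eacp2_mul mulE !scale0r addr0 !scaler0 eqxx.
- subst a; left.
  have I1 := @iso_b K b h2 b0.
  split; first by exists (swapf K 1 (b / 2%:R)).
  case=> g Hg; apply: (@notPP_C2 K h2); apply: PP_fwd Hg _.
  exact: PP_bwd I1 (@PP_C1 K).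
- subst b; left.
  have I1 := @iso_a K a h2 a0.
  split; first by exists (diagf K 1 (a / 2%:R)).
  case=> g Hg; apply: (@notPP_C2 K h2); apply: PP_fwd Hg _.
  exact: PP_bwd I1 (@PP_C1 K).
- right.
  have I2 := @iso_ab K a b a0 b0.
  split; last by exists (diagf K b a).
  case=> g Hg; apply: (@notPP_C2 K h2); apply: PP_fwd I2 _.
  exact: PP_bwd Hg (@PP_C1 K).
Qed.
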